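(* For a positive integer $n$, let $D_n$ be the tournament on vertex set $\{v_1,\ldots,v_n\}$ in which, for $1\le i<j\le n$ with $(i,j)\neq(1,n)$, the edge between $v_i$ and $v_j$ is directed from $v_i$ to $v_j$, and the edge between $v_1$ and $v_n$ is directed from $v_n$ to $v_1$. Then for all positive integers $n,k$ (with $n\ge 2$), $P_{v_1\approx v_n}(D_n;k)=k(k-1)^{n-2}$, $P_{v_1\not\approx v_n}(D_n;k)=k^{n-1}(k-1)$, and consequently $P(D_n;k)=k(k-1)^{n-2}+k^{n-1}(k-1)$.
   Context: For a positive integer $k$, a proper $k$-coloring of a digraph $D$ is a map $c:V(D)\to\{1,\ldots,k\}$ such that each color class induces a subdigraph with no directed cycle; $P(D;k)$ is the number of proper $k$-colorings. For vertices $u,v$, $P_{u\approx v}(D;k)$ is the number of proper $k$-colorings in which $u$ and $v$ receive the same color, and $P_{u\not\approx v}(D;k)$ the number in which they receive different colors. *)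

(* Defs.v *)
From mathcomp Require Import all_boot.
From mathcomp Require Import boolp.
Set Implicit Arguments. Unset Strict Implicit. Unset Printing Implicit Defensive.

Definition induces_acyclic (V : finType) (e : rel V) (A : {set V}) : Prop :=
  forall s : seq V, s != [::] -> all (fun x => x \in A) s -> uniq s ->
    ~~ cycle e s.

Definition proper_coloring (V : finType) (e : rel V) (k : nat)
    (c : {ffun V -> 'I_k}) : Prop :=
  forall a : 'I_k, induces_acyclic e [set x | c x == a].

Definition chrom_count (V : finType) (e : rel V) (k : nat) : nat :=
  #|[set c : {ffun V -> 'I_k} | `[< proper_coloring e c >] ]|.

Definition chrom_count_same (V : finType) (e : rel V) (k : nat) (u v : V) : nat :=
  #|[set c : {ffun V -> 'I_k} | `[< proper_coloring e c >] && (c u == c v)]|.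
Definition chrom_count_diff (V : finType) (e : rel V) (k : nat) (u v : V) : nat :=
  #|[set c : {ffun V -> 'I_k} | `[< proper_coloring e c >] && (c u != c v)]|.

(* The tournament D_n on vertices 'I_n, where vertex i (0-based) is v_{i+1}:
   for i < j, arc i -> j, except the pair {0, n-1}, oriented n-1 -> 0. *)
Definition Dn_arc (n : nat) : rel 'I_n := fun i j =>
  if (val i == 0) && (val j == n.-1) then false
  else if (val i == n.-1) && (val j == 0) then true
  else val i < val j.

(* Main.v *)
Require Import Defs.
From mathcomp Require Import all_boot.
From mathcomp Require Import boolp zify.

Section S.
Variables (n : nat) (v1 vn : 'I_n).
Hypotheses (Hn : 2 <= n) (h1 : val v1 = 0) (hn : val vn = n.-1).

Lemma arc_lt x y : Dn_arc x y -> ~~ ((x == vn) && (y == v1)) -> val x < val y.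
Proof.
rewrite /Dn_arc; case: ifP => // _; case: ifP => // /andP[/eqP ex /eqP ey] _.
have -> : x = vn by apply: val_inj; rewrite ex hn.
have -> : y = v1 by apply: val_inj; rewrite ey h1.
by rewrite !eqxx.
Qed.

Lemma arc_v1 y : Dn_arc v1 y -> (val y != 0) && (val y != n.-1).
Proof.
rewrite /Dn_arc h1 eqxx /=; have := ltn_ord y.
case: eqP => //= yn _; case: ifP => [/andP[/eqP ? _]|_]; first lia.
move: yn => /eqP; lia.
Qed.

Lemma acyc_iff (A : {set 'I_n}) :
  induces_acyclic (@Dn_arc n) A <->
  ~~ [&& v1 \in A, vn \in A & [exists m, [&& val m != 0, val m != n.-1 & m \in A]]].
Proof.
split.
- move=> H; apply/negP => /and3P [a1 an /existsP [m /and3P [m0 mn mA]]].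
  have hm := ltn_ord m.
  apply: (negP (H [:: v1; m; vn] isT _ _)) => //=; first by rewrite a1 mA an.
  + rewrite !inE negb_or -!(inj_eq val_inj) /= h1 hn; move: m0 mn hm; case: (m) => /= mm ?; lia.
  + rewrite /Dn_arc h1 hn !eqxx /=.
    have -> : (n.-1 == 0) = false by apply/eqP; lia.
    move: (m0) (mn) => /negbTE -> /negbTE -> /=; move: m0 mn hm; case: (m) => /= mm ? ? ? ?; apply/andP; rewrite ?andbF ?andbT /=; split; lia.
- move=> Hnot s sne sA _; apply/negP => cyc.
  have nx x : x \in s -> Dn_arc x (next s x) by move=> xs; exact: next_cycle.
  case: (boolP ((v1 \in s) && (vn \in s))) => [/andP[b1 bn]|nb].
  + move/negP: Hnot; apply; rewrite (allP sA _ b1) (allP sA _ bn) /=.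
    apply/existsP; exists (next s v1); case/andP: (@arc_v1 _ (nx _ b1)) => a b; apply/and3P; split; [exact: a | exact: b|].
    by apply: (allP sA); rewrite mem_next.
  + have lt x : x \in s -> val x < val (next s x).
      move=> xs; apply: arc_lt; first exact: nx.
      apply/negP => /andP[/eqP ex /eqP ey]; move/negP: nb; apply.
      by rewrite -ey mem_next xs -ex.
    case: s sne sA cyc nx lt {nb} => // x0 s _ _ _ _ lt.
    have [m ms mx] := @arg_maxnP _ x0 (mem (x0 :: s)) val (mem_head _ _).
    have nm : next (x0 :: s) m \in x0 :: s by rewrite mem_next.
    have := mx _ nm.
    have := lt _ ms; move=> a b; have := leq_trans a b; by rewrite ltnn.
Qed.

Lemma proper_iff k (c : {ffun 'I_n -> 'I_k}) :
  proper_coloring (@Dn_arc n) c <->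
  (c v1 != c vn) || [forall m, (val m != 0) && (val m != n.-1) ==> (c m != c v1)].
Proof.
split.
- move=> /(_ (c v1)) /acyc_iff H.
  apply/orP; case: (eqVneq (c v1) (c vn)) => [e|ne]; [right|by left].
  apply/forallP => m; apply/implyP => /andP[m0 mn]; apply/negP => /eqP cm.
  move/negP: H; apply; rewrite !inE eqxx -e eqxx /=; apply/existsP; exists m.
  by rewrite inE cm eqxx andbT; apply/andP.
- move=> H a; apply/acyc_iff; rewrite !inE; apply/negP => /and3P[/eqP a1 /eqP an].
  move=> /existsP [m /and3P [m0 mn]]; rewrite inE => /eqP am.
  move: H; rewrite a1 an eqxx /= => /forallP /(_ m); by rewrite m0 mn am eqxx.
Qed.


Lemma v1vn : v1 != vn.
Proof. by rewrite -(inj_eq val_inj) /= h1 hn; apply/eqP; lia. Qed.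

Lemma middleE x : (val x != 0) && (val x != n.-1) = (x != v1) && (x != vn).
Proof. by rewrite -!(inj_eq val_inj) /= h1 hn. Qed.

Lemma properb k (c : {ffun 'I_n -> 'I_k}) :
  `[< proper_coloring (@Dn_arc n) c >] =
  (c v1 != c vn) || [forall m, (m != v1) && (m != vn) ==> (c m != c v1)].
Proof.
apply/idP/idP => [/asboolP/proper_iff H|H]; last apply/asboolP/proper_iff.
  case/orP: H => [->//|/forallP H]; apply/orP; right; apply/forallP => m.
  by have := H m; rewrite middleE.
case/orP: H => [->//|/forallP H]; apply/orP; right; apply/forallP => m.
by have := H m; rewrite middleE.
Qed.

Lemma card_fam k (F : 'I_n -> pred 'I_k) :
  #|[set c : {ffun 'I_n -> 'I_k} | [forall x, c x \in F x]]| = \prod_x #|F x|.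
Proof.
rewrite -[RHS]big_enum -[RHS](big_map (fun x => #|F x|) xpredT id) -foldrE.
rewrite -(card_family F); apply: eq_card => c; rewrite inE.
by apply/forallP/familyP.
Qed.

Lemma prod3 (f : 'I_n -> nat) a b r : f v1 = a -> f vn = b ->
  (forall x, x != v1 -> x != vn -> f x = r) -> \prod_x f x = a * b * r ^ (n - 2).
Proof.
move=> fa fb fr.
rewrite (bigD1 v1) // (bigD1 vn) /=; last by rewrite eq_sym v1vn.
rewrite (eq_bigr (fun _ => r)); last by move=> x /andP[? ?]; exact: fr.
rewrite fa fb mulnA prod_nat_const; congr (_ * _ ^ _).
have e1 := cardD1 v1 (predT : {pred 'I_n}); rewrite card_ord inE add1n in e1.
have e2 := cardD1 vn [predD1 predT & v1]; rewrite !inE eq_sym v1vn /= in e2.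
have -> : #|(fun i : 'I_n => (i != v1) && (i != vn))| = #|[predD1 [predD1 predT & v1] & vn]|.
  by apply: eq_card => x; rewrite [in LHS]unfold_in !inE /= andbT andbC.
move: e1 e2 => E1 E2; rewrite E2 in E1; rewrite [in RHS]E1 add1n subn2 /=.
by apply: eq_card => x; rewrite !inE.
Qed.

Lemma part k (Q : pred {ffun 'I_n -> 'I_k}) :
  #|[set c | Q c]| = \sum_a #|[set c | Q c && (c v1 == a)]|.
Proof.
rewrite -sum1_card (partition_big (fun c : {ffun 'I_n -> 'I_k} => c v1) predT) //.
apply: eq_bigr => a _; rewrite -sum1_card; apply: eq_bigl => c; by rewrite !inE.
Qed.


Lemma same_count k : chrom_count_same (@Dn_arc n) k v1 vn = k * (k-1)^(n-2).
Proof.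
rewrite /chrom_count_same part.
rewrite (eq_bigr (fun _ => (k-1)^(n-2))) ?sum_nat_const ?card_ord //.
move=> a _.
pose G x : pred 'I_k := if x == v1 then pred1 a else if x == vn then pred1 a else predC1 a.
transitivity #|[set c : {ffun 'I_n -> 'I_k} | [forall x, c x \in G x]]|.
  apply: eq_card => c; rewrite !inE properb.
  apply/idP/forallP.
  - case/andP => /andP[P /eqP e] /eqP ca x. rewrite e eqxx /= in P.
    rewrite /G; case: ifP => [/eqP->|x1]; first by rewrite inE ca.
    case: ifP => [/eqP->|xn]; first by rewrite inE -e ca.
    rewrite inE -ca e. by have := forallP P x; rewrite x1 xn.
  - move=> H. have := H v1; rewrite /G eqxx inE => /eqP ca.
    have := H vn; rewrite /G eq_sym (negbTE v1vn) eqxx inE => /eqP cb.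
    rewrite ca cb eqxx /= !andbT.
    apply/forallP => m; apply/implyP => /andP[m1 mn]; have := H m.
    by rewrite /G (negbTE m1) (negbTE mn) inE.
rewrite card_fam (@prod3 _ 1 1 (k-1)) ?mul1n ?expn1 //.
- by rewrite /G eqxx card1.
- by rewrite /G eq_sym (negbTE v1vn) eqxx card1.
- by move=> x x1 xn; rewrite /G (negbTE x1) (negbTE xn) cardC1 card_ord subn1.
Qed.

Lemma diff_count k : chrom_count_diff (@Dn_arc n) k v1 vn = k ^ (n - 1) * (k - 1).
Proof.
rewrite /chrom_count_diff part.
rewrite (eq_bigr (fun _ => (k-1) * k^(n-2))) ?sum_nat_const ?card_ord //; last first.
move=> a _.
pose G x : pred 'I_k := if x == v1 then pred1 a else if x == vn then predC1 a else predT.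
transitivity #|[set c : {ffun 'I_n -> 'I_k} | [forall x, c x \in G x]]|.
  apply: eq_card => c; rewrite !inE properb.
  apply/idP/forallP.
  - case/andP => /andP[_ ne] /eqP ca x.
    rewrite /G; case: ifP => [/eqP->|x1]; first by rewrite inE ca.
    case: ifP => [/eqP->|xn]; first by rewrite inE -ca eq_sym.
    by [].
  - move=> H. have := H v1; rewrite /G eqxx inE => /eqP ca.
    have := H vn; rewrite /G eq_sym (negbTE v1vn) eqxx inE => cb.
    by rewrite ca eq_sym cb eqxx.
rewrite card_fam (@prod3 _ 1 (k-1) k) ?mul1n //.
- by rewrite /G eqxx card1.
- by rewrite /G eq_sym (negbTE v1vn) eqxx cardC1 card_ord subn1.
- by move=> x x1 xn; rewrite /G (negbTE x1) (negbTE xn) card_ord.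
have -> : n - 1 = (n - 2).+1 by lia.
by rewrite expnS [(k - 1) * _]mulnC mulnA.
Qed.

End S.

Lemma split_card (T : finType) (P Q : pred T) :
  #|[set x | P x]| = #|[set x | P x && Q x]| + #|[set x | P x && ~~ Q x]|.
Proof.
rewrite -(cardID Q [set x | P x]); congr (_ + _); apply: eq_card => x;
  by rewrite !inE // andbC.
Qed.

Theorem mainTheorem10 (n k : nat) (v1 vn : 'I_n) :
  2 <= n -> 0 < k -> val v1 = 0 -> val vn = n.-1 ->
  [/\ chrom_count_same (@Dn_arc n) k v1 vn = k * (k - 1) ^ (n - 2),
      chrom_count_diff (@Dn_arc n) k v1 vn = k ^ (n - 1) * (k - 1)
    & chrom_count (@Dn_arc n) k = k * (k - 1) ^ (n - 2) + k ^ (n - 1) * (k - 1)].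
Proof.
move=> Hn _ h1 hn.
have S := @same_count n v1 vn Hn h1 hn k; have D := @diff_count n v1 vn Hn h1 hn k.
split => //.
rewrite -S -D /chrom_count /chrom_count_same /chrom_count_diff.
exact: split_card.
Qed.
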